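(* For every graph $G$ with $n$ vertices, $P(G,m)-P_{DP}(G,m)=O(m^{n-2})$ as $m\to\infty$.
   Context: All graphs are finite and simple. $P(G,m)$ denotes the chromatic polynomial of $G$. A cover of a graph $G$ is a pair $\mathcal{H}=(L,H)$ where $H$ is a graph and $L:V(G)\to\mathcal{P}(V(H))$ satisfies: (1) the sets $L(u)$, $u\in V(G)$, partition $V(H)$; (2) for every $u$, $H[L(u)]$ is complete; (3) if $E_H(L(u),L(v))\neq\emptyset$ then $u=v$ or $uv\in E(G)$; (4) if $uv\in E(G)$ then $E_H(L(u),L(v))$ is a matching (possibly empty). Here $E_H(S,U)$ is the set of edges of $H$ between $S$ and $U$. The cover is $m$-fold if $|L(u)|=m$ for all $u$. An $\mathcal{H}$-coloring is an independent set of $H$ of size $|V(G)|$. $P_{DP}(G,\mathcal{H})$ is the number of $\mathcal{H}$-colorings, and $P_{DP}(G,m)$ is the minimum of $P_{DP}(G,\mathcal{H})$ over all $m$-fold covers $\mathcal{H}$ of $G$. *)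

(* Defs.v *)
From HB Require Import structures.
From mathcomp Require Import all_boot all_order all_algebra.
Set Implicit Arguments. Unset Strict Implicit. Unset Printing Implicit Defensive.

(* A finite simple graph G on vertex set 'I_n is a relation e : rel 'I_n,
   assumed symmetric and irreflexive (hypotheses of the theorem). *)

Definition chrom_poly (n : nat) (e : rel 'I_n) (m : nat) : nat :=
  #|[set f : {ffun 'I_n -> 'I_m} | [forall u, forall v, e u v ==> (f u != f v)]]|.

(* An m-fold cover (L, H): up to isomorphism, V(H) = 'I_n * 'I_m with
   L(u) = {u} x 'I_m.  H is given by its (ordered-pair) edge set EH. *)
Definition is_mcover (n m : nat) (e : rel 'I_n)
    (EH : {set ('I_n * 'I_m) * ('I_n * 'I_m)}) : bool :=
  [&&
      [forall x, forall y, ((x, y) \in EH) ==> ((y, x) \in EH)],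
      [forall x, (x, x) \notin EH],
      [forall u, forall i, forall j, (i != j) ==> (((u, i), (u, j)) \in EH)],
      [forall u, forall v, forall i, forall j,
         ((u != v) && (((u, i), (v, j)) \in EH)) ==> e u v] &
      [forall u, forall v, e u v ==>
         [&& [forall i, forall j, forall j',
               ((((u, i), (v, j)) \in EH) && (((u, i), (v, j')) \in EH)) ==> (j == j')] &
             [forall i, forall i', forall j,
               ((((u, i), (v, j)) \in EH) && (((u, i'), (v, j)) \in EH)) ==> (i == i')]]]].

(* Number of H-colourings: independent sets of H of size |V(G)| = n. *)
Definition num_cover_colorings (n m : nat)
    (EH : {set ('I_n * 'I_m) * ('I_n * 'I_m)}) : nat :=
  #|[set I : {set 'I_n * 'I_m} |
      (#|I| == n) && [forall x in I, forall y in I, (x, y) \notin EH]]|.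

(* The default value
   2^(n*m) (= number of subsets of V(H)) is an upper bound of every count,
   and m-fold covers always exist, so this is the true minimum. *)
Definition dp_chrom (n : nat) (e : rel 'I_n) (m : nat) : nat :=
  \big[minn/2 ^ (n * m)]_(EH : {set ('I_n * 'I_m) * ('I_n * 'I_m)} | is_mcover e EH)
     num_cover_colorings EH.

(* Main.v *)
Require Import Defs.
From HB Require Import structures.
From mathcomp Require Import all_boot all_order all_algebra.
From mathcomp Require Import zify.
Import Order.TTheory GRing.Theory Num.Theory.

Lemma card_set_sum (T : finType) (P : pred T) :
  #|[set x | P x]| = \sum_x (P x : nat).
Proof.
rewrite -sum1_card big_mkcond /=; apply: eq_bigr => x _.
by rewrite inE; case: (P x).
Qed.

Lemma card_compl_sum (T : finType) (P : pred T) :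
  #|[set x | P x]| + #|[set x | ~~ P x]| = #|T|.
Proof.
rewrite !card_set_sum -big_split /= -sum1_card.
by apply: eq_bigr => x _; case: (P x).
Qed.

Lemma double_count (X Y : finType) (Q : X -> Y -> bool) :
  \sum_x #|[set y | Q x y]| = \sum_y #|[set x | Q x y]|.
Proof.
under eq_bigr => x _ do rewrite card_set_sum.
rewrite exchange_big /=.
by apply: eq_bigr => y _; rewrite card_set_sum.
Qed.

Lemma card_fix2 (n m : nat) (w1 w2 : 'I_n) (i0 : 'I_m) : w1 != w2 ->
  #|[set g : {ffun 'I_n -> 'I_m} | (g w1 == i0) && (g w2 == i0)]| = m ^ (n - 2).
Proof.
move=> hw.
pose F := fun x : 'I_n => if (x == w1) || (x == w2) then pred1 i0 else predT.
have -> : [set g : {ffun 'I_n -> 'I_m} | (g w1 == i0) && (g w2 == i0)] =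
          [set g in family F].
  apply/setP => g; rewrite !inE; apply/andP/familyP.
    move=> [/eqP h1 /eqP h2] x; rewrite /F.
    by case: eqP => [->|_]; [rewrite /= h1 inE|case: eqP => [->|_]; rewrite /= ?h2 ?inE].
  move=> h; split.
    by have := h w1; rewrite /F eqxx.
  by have := h w2; rewrite /F eqxx orbT.
rewrite cardsE card_family.
have -> : foldr muln 1 [seq #|F x| | x : 'I_n] = \prod_x #|F x|.
  by rewrite foldrE big_map big_enum.
rewrite (bigID (fun x => (x == w1) || (x == w2))) /=.
rewrite big1; last first.
  by move=> x hx; rewrite /F hx card1.
rewrite mul1n.
have -> : \prod_(i | ~~ ((i == w1) || (i == w2))) #|F i| =
          \prod_(i | ~~ ((i == w1) || (i == w2))) m.
  apply: eq_bigr => x /negbTE hx; by rewrite /F hx; apply: (card_ord m).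
rewrite (prod_nat_const [pred i : 'I_n | ~~ ((i == w1) || (i == w2))] m); congr (_ ^ _).
have := @card_compl_sum _ (fun x : 'I_n => (x == w1) || (x == w2)).
rewrite card_ord.
have -> : #|[set x : 'I_n | (x == w1) || (x == w2)]| = 2.
  rewrite (_ : 2 = (w1 != w2).+1); last by rewrite hw.
  rewrite -(cards2 w1 w2); apply: eq_card => x; by rewrite !inE.
move=> h; rewrite -[X in _ = X - 2]h addKn cardsE; apply: eq_card => x; by rewrite !inE.
Qed.

Definition blank (n m : nat) (w1 w2 : 'I_n) (i0 : 'I_m) (f : {ffun 'I_n -> 'I_m}) :
  {ffun 'I_n -> 'I_m} := [ffun x => if (x == w1) || (x == w2) then i0 else f x].
Arguments blank {n m}.

Lemma inj_bound (n m : nat) (S : {set {ffun 'I_n -> 'I_m}}) (w1 w2 : 'I_n) (i0 : 'I_m) :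
  w1 != w2 ->
  (forall f1 f2, f1 \in S -> f2 \in S ->
     (forall x, x != w1 -> x != w2 -> f1 x = f2 x) -> f1 w1 = f2 w1 /\ f1 w2 = f2 w2) ->
  #|S| <= m ^ (n - 2).
Proof.
move=> hw hS.
rewrite -(card_in_imset (f := blank w1 w2 i0)); last first.
  move=> f1 f2 h1 h2 heq.
  have ag : forall x, x != w1 -> x != w2 -> f1 x = f2 x.
    move=> x hx1 hx2; have := congr1 (fun g : {ffun 'I_n -> 'I_m} => g x) heq.
    by rewrite !ffunE (negbTE hx1) (negbTE hx2).
  have [e1 e2] := hS f1 f2 h1 h2 ag.
  apply/ffunP => x.
  case: (eqVneq x w1) => [->//|hx1]; case: (eqVneq x w2) => [->//|hx2].
  exact: ag.
rewrite -(@card_fix2 n m w1 w2 i0 hw); apply: subset_leq_card.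
apply/subsetP => g /imsetP [f _ ->]; rewrite inE !ffunE !eqxx orbT.
by rewrite eqxx.
Qed.

Lemma ltn_neq {n : nat} {a b : 'I_n} : a < b -> a != b.
Proof. by move=> h; apply/eqP => E; move: h; rewrite E ltnn. Qed.

Lemma two_edge (n m : nat) (i0 : 'I_m) (u1 v1 u2 v2 : 'I_n) :
  u1 < v1 -> u2 < v2 -> (u1, v1) != (u2, v2) ->
  #|[set f : {ffun 'I_n -> 'I_m} | (f u1 == f v1) && (f u2 == f v2)]| <= m ^ (n - 2).
Proof.
move=> l1 l2 hne.
have n1 := ltn_neq l1; have n2 := ltn_neq l2.
case: (eqVneq v1 v2) => [ev|nv].
  subst v2.
  have nu : u1 != u2.
    by apply: contra hne => /eqP ->.
  apply: (@inj_bound n m _ v1 u2 i0).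
    by rewrite eq_sym ltn_neq.
  move=> f1 f2; rewrite !inE => /andP [/eqP h1 /eqP h2] /andP [/eqP g1 /eqP g2] ag.
  have a1 : f1 u1 = f2 u1 by apply: ag; [exact: n1 | exact: nu].
  split; first by rewrite -h1 -g1.
  by rewrite h2 -h1 a1 g1 -g2.
apply: (@inj_bound n m _ v1 v2 i0 nv).
move=> f1 f2; rewrite !inE => /andP [/eqP h1 /eqP h2] /andP [/eqP g1 /eqP g2] ag.
have cA : u1 != v2 -> f1 v1 = f2 v1.
  by move=> h; rewrite -h1 -g1; apply: ag.
have cB : u2 != v1 -> f1 v2 = f2 v2.
  by move=> h; rewrite -h2 -g2; apply: ag.
case: (eqVneq u1 v2) => [e1|ne1].
  have ne2 : u2 != v1.
    apply/eqP => e2; move: l1 l2; rewrite e1 e2 => l1 l2.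
    by have := ltn_trans l1 l2; rewrite ltnn.
  have b := cB ne2.
  split=> //.
  by rewrite -h1 -g1 e1 b.
case: (eqVneq u2 v1) => [e2|ne2].
  have a := cA ne1.
  by split=> //; rewrite -h2 -g2 e2 a.
by split; [apply: cA | apply: cB].
Qed.

Definition E (n : nat) (e : rel 'I_n) : {set 'I_n * 'I_n} :=
  [set p : 'I_n * 'I_n | (p.1 < p.2) && e p.1 p.2].
Arguments E {n}.
Definition cG (n m : nat) (e : rel 'I_n) (f : {ffun 'I_n -> 'I_m}) : {set 'I_n * 'I_n} :=
  [set p in E e | f p.1 == f p.2].
Definition cH (n m : nat) (e : rel 'I_n) (EH : {set ('I_n * 'I_m) * ('I_n * 'I_m)})
  (f : {ffun 'I_n -> 'I_m}) : {set 'I_n * 'I_n} :=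
  [set p in E e | ((p.1, f p.1), (p.2, f p.2)) \in EH].
Arguments cG {n m}. Arguments cH {n m}.

Lemma chrom_cG (n m : nat) (e : rel 'I_n) : symmetric e -> irreflexive e ->
  chrom_poly e m = #|[set f : {ffun 'I_n -> 'I_m} | cG e f == set0]|.
Proof.
move=> esym eirr; rewrite /chrom_poly; apply: eq_card => f; rewrite !inE.
apply/idP/idP.
  move/forallP => h; apply/eqP/setP => p; rewrite !inE.
  apply/negP => /andP [/andP [_ hp] hf].
  by have := h p.1 => /forallP /(_ p.2); rewrite hp hf.
move/eqP/setP => h; apply/forallP => u; apply/forallP => v; apply/implyP => huv.
apply/negP => /eqP hf.
case: (ltngtP u v) => [l|l|l].
- by have := h (u, v); rewrite !inE l huv hf eqxx.
- by have := h (v, u); rewrite !inE l esym huv hf eqxx.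
- by move: huv; rewrite (ord_inj l) eirr.
Qed.

Definition graphf (n m : nat) (f : {ffun 'I_n -> 'I_m}) : {set 'I_n * 'I_m} :=
  [set (u, f u) | u : 'I_n].
Arguments graphf {n m}.

Lemma graphf_card (n m : nat) (f : {ffun 'I_n -> 'I_m}) : #|graphf f| = n.
Proof.
rewrite /graphf card_imset; last by move=> x y [].
exact: card_ord.
Qed.

Lemma graphf_inj (n m : nat) : injective (@graphf n m).
Proof.
move=> f1 f2 h; apply/ffunP => u.
have : (u, f1 u) \in graphf f2 by rewrite -h; apply/imsetP; exists u.
by case/imsetP => v _ [-> ->].
Qed.

Lemma colorings_fun (n m : nat) (EH : {set ('I_n * 'I_m.+1) * ('I_n * 'I_m.+1)}) :
  (forall u i j, i != j -> ((u, i), (u, j)) \in EH) ->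
  num_cover_colorings EH =
  #|[set f : {ffun 'I_n -> 'I_m.+1} | [forall u, forall v, ((u, f u), (v, f v)) \notin EH]]|.
Proof.
move=> cliq; rewrite /num_cover_colorings.
rewrite -(card_imset _ (@graphf_inj n m.+1)); apply: eq_card => I.
rewrite inE; apply/idP/idP.
  case/andP => /eqP cI /forallP indep.
  have indep' : forall x y, x \in I -> y \in I -> (x, y) \notin EH.
    move=> x y hx hy; have := indep x; rewrite hx /= => /forallP /(_ y).
    by rewrite hy.
  have fst_inj : {in I &, injective (fun x : 'I_n * 'I_m.+1 => x.1)}.
    move=> [u i] [v j] hx hy /= euv; subst v.
    case: (eqVneq i j) => [->//|nij].
    by have := indep' _ _ hx hy; rewrite cliq.
  have fullI : (fun x : 'I_n * 'I_m.+1 => x.1) @: I = setT.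
    apply/eqP; rewrite eqEcard subsetT cardsT card_in_imset // cI.
    by rewrite card_ord leqnn.
  pose f := [ffun u => odflt ord0 [pick i | (u, i) \in I]].
  have inI : forall u, (u, f u) \in I.
    move=> u; rewrite /f ffunE; case: pickP => [i //|none].
    have : u \in (fun x : 'I_n * 'I_m.+1 => x.1) @: I by rewrite fullI inE.
    by case/imsetP => [[v i] hvi /= ev]; subst v; have := none i; rewrite hvi.
  have gI : graphf f = I.
    apply/eqP; rewrite eqEcard graphf_card cI leqnn andbT.
    by apply/subsetP => x /imsetP [u _ ->].
  apply/imsetP; exists f => //; rewrite inE.
  apply/forallP => u; apply/forallP => v; exact: indep'.
case/imsetP => f; rewrite inE => /forallP good ->.
rewrite graphf_card eqxx /=.
apply/forallP => x; apply/implyP => /imsetP [u _ ->].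
apply/forallP => y; apply/implyP => /imsetP [v _ ->].
by have := good u => /forallP /(_ v).
Qed.


Lemma cover_props (n m : nat) (e : rel 'I_n) (EH : {set ('I_n * 'I_m) * ('I_n * 'I_m)}) :
  is_mcover e EH ->
  [/\ (forall x y, (x, y) \in EH -> (y, x) \in EH),
      (forall x, (x, x) \notin EH),
      (forall u i j, i != j -> ((u, i), (u, j)) \in EH),
      (forall u v i j, u != v -> ((u, i), (v, j)) \in EH -> e u v) &
      (forall u v i j j', e u v -> ((u, i), (v, j)) \in EH -> ((u, i), (v, j')) \in EH -> j = j')].
Proof.
case/and5P => /forallP h1 /forallP h2 /forallP h3 /forallP h4 /forallP h5; split.
- move=> x y; have := h1 x => /forallP /(_ y) /implyP; exact.
- exact: h2.
- move=> u i j; have := h3 u => /forallP /(_ i) /forallP /(_ j) /implyP; exact.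
- move=> u v i j nuv hE.
  have := h4 u => /forallP /(_ v) /forallP /(_ i) /forallP /(_ j) /implyP; apply.
  by rewrite nuv hE.
- move=> u v i j j' euv a b.
  have := h5 u => /forallP /(_ v) /implyP /(_ euv) /andP [/forallP c _].
  have := c i => /forallP /(_ j) /forallP /(_ j') /implyP /(_ _) /eqP; apply.
  by rewrite a b.
Qed.

Lemma good_cH (n m : nat) (e : rel 'I_n) (EH : {set ('I_n * 'I_m) * ('I_n * 'I_m)})
  (f : {ffun 'I_n -> 'I_m}) : symmetric e -> is_mcover e EH ->
  [forall u, forall v, ((u, f u), (v, f v)) \notin EH] = (cH e EH f == set0).
Proof.
move=> esym /cover_props [symH irrH _ edgeH _].
apply/idP/idP.
  move/forallP => h; apply/eqP/setP => p; rewrite !inE.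
  apply/negP => /andP [_ hp].
  by have := h p.1 => /forallP /(_ p.2); rewrite hp.
move/eqP/setP => h; apply/forallP => u; apply/forallP => v.
apply/negP => hE.
case: (ltngtP u v) => [l|l|l].
- by have := h (u, v); rewrite !inE l hE (edgeH _ _ _ _ (ltn_neq l) hE).
- have hE' := symH _ _ hE.
  by have := h (v, u); rewrite !inE l hE' (edgeH _ _ _ _ (ltn_neq l) hE').
- by move: hE; rewrite (ord_inj l) (negbTE (irrH _)).
Qed.

Lemma cH_cG (n m : nat) (e : rel 'I_n) (EH : {set ('I_n * 'I_m) * ('I_n * 'I_m)})
  (p : 'I_n * 'I_n) : is_mcover e EH ->
  #|[set f : {ffun 'I_n -> 'I_m} | p \in cH e EH f]| <= #|[set f : {ffun 'I_n -> 'I_m} | p \in cG e f]|.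
Proof.
move=> /cover_props [_ _ _ _ matchH].
case: (boolP (p \in E e)) => hp; last first.
  rewrite (_ : [set f | p \in cH e EH f] = set0) ?cards0 //.
  by apply/setP => f; rewrite !inE; apply/negP => /andP [h _]; move: hp; rewrite !inE h.
move: (hp); rewrite inE => /andP [l euv].
pose upd (f : {ffun 'I_n -> 'I_m}) : {ffun 'I_n -> 'I_m} :=
  [ffun x => if x == p.2 then f p.1 else f x].
have nuv : p.1 != p.2 := ltn_neq l.
rewrite -(card_in_imset (f := upd)); last first.
  move=> f1 f2; rewrite !inE l euv /= => h1 h2 heq.
  have ag : forall x, x != p.2 -> f1 x = f2 x.
    move=> x hx; have := congr1 (fun g : {ffun 'I_n -> 'I_m} => g x) heq.
    by rewrite !ffunE (negbTE hx).
  have a1 := ag _ nuv.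
  apply/ffunP => x; case: (eqVneq x p.2) => [->|hx]; last exact: ag.
  apply: (matchH _ _ _ _ _ euv h1); by rewrite a1.
apply: subset_leq_card; apply/subsetP => g /imsetP [f _ ->].
by rewrite !inE l euv /= !ffunE eqxx (negbTE nuv).
Qed.

Definition pairs (n m : nat) (e : rel 'I_n) (f : {ffun 'I_n -> 'I_m}) :
  {set ('I_n * 'I_n) * ('I_n * 'I_n)} :=
  [set pq | [&& pq.1 \in cG e f, pq.2 \in cG e f & pq.1 != pq.2]].
Arguments pairs {n m}.

Lemma bonf (n m : nat) (e : rel 'I_n) (f : {ffun 'I_n -> 'I_m}) :
  #|cG e f| <= (cG e f != set0) + #|pairs e f|.
Proof.
case: (set_0Vmem (cG e f)) => [->|[p0 hp0]]; first by rewrite cards0.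
have -> : (cG e f != set0) by apply/set0Pn; exists p0.
rewrite (cardsD1 p0) hp0 add1n add1n ltnS.
rewrite -(card_imset _ (f := fun q => (p0, q))); last by move=> x y [].
apply: subset_leq_card; apply/subsetP => pq /imsetP [q hq ->].
move: hq; rewrite in_setD1 => /andP [nq hq]; rewrite inE /= hq hp0 /= eq_sym nq.
by [].
Qed.

Definition Kc (n : nat) (e : rel 'I_n) : nat :=
  #|[set pq : ('I_n * 'I_n) * ('I_n * 'I_n) | [&& pq.1 \in E e, pq.2 \in E e & pq.1 != pq.2]]|.
Arguments Kc {n}.

Lemma sum_pairs (n m : nat) (e : rel 'I_n) :
  \sum_(f : {ffun 'I_n -> 'I_m.+1}) #|pairs e f| <= Kc e * m.+1 ^ (n - 2).
Proof.
have -> : \sum_(f : {ffun 'I_n -> 'I_m.+1}) #|pairs e f| =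
          \sum_(f : {ffun 'I_n -> 'I_m.+1}) #|[set pq | pq \in pairs e f]|.
  by apply: eq_bigr => f _; apply: eq_card => y; rewrite inE.
rewrite double_count /Kc card_set_sum big_distrl /=.
apply: leq_sum => [[[u1 v1] [u2 v2]]] _ /=.
case: (boolP [&& (u1, v1) \in E e, (u2, v2) \in E e & (u1, v1) != (u2, v2)]) => h.
  rewrite mul1n; move: (h) => /and3P [h1 h2 ne].
  move: h1 h2; rewrite !inE /= => /andP [l1 _] /andP [l2 _].
  apply: leq_trans (@two_edge n m.+1 ord0 _ _ _ _ l1 l2 ne).
  apply: subset_leq_card; apply/subsetP => f; rewrite !inE /=.
  by case/and3P => /andP [_ ->] /andP [_ ->].
rewrite mul0n leqn0 cards_eq0; apply/eqP/setP => f; rewrite !inE /=.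
apply/negP => /and3P [/andP [a _] /andP [b _] c].
by move: h; rewrite !inE /= a b c.
Qed.

Lemma cover_lower (n m : nat) (e : rel 'I_n)
  (EH : {set ('I_n * 'I_m.+1) * ('I_n * 'I_m.+1)}) :
  symmetric e -> irreflexive e -> is_mcover e EH ->
  chrom_poly e m.+1 <= num_cover_colorings EH + Kc e * m.+1 ^ (n - 2).
Proof.
move=> esym eirr cov.
have [_ _ cliq _ _] := @cover_props _ _ _ _ cov.
rewrite (@chrom_cG n m.+1 e esym eirr) (@colorings_fun n m EH cliq).
have -> : #|[set f : {ffun 'I_n -> 'I_m.+1} | [forall u, forall v, ((u, f u), (v, f v)) \notin EH]]|
   = #|[set f : {ffun 'I_n -> 'I_m.+1} | cH e EH f == set0]|.
  by apply: eq_card => f; rewrite !inE (@good_cH n m.+1 e EH f esym cov).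
have tG := @card_compl_sum _ (fun f : {ffun 'I_n -> 'I_m.+1} => cG e f == set0).
have tH := @card_compl_sum _ (fun f : {ffun 'I_n -> 'I_m.+1} => cH e EH f == set0).
have hd : #|[set f : {ffun 'I_n -> 'I_m.+1} | ~~ (cH e EH f == set0)]| <=
          #|[set f : {ffun 'I_n -> 'I_m.+1} | ~~ (cG e f == set0)]| + Kc e * m.+1 ^ (n - 2).
  rewrite !card_set_sum.
  apply: (@leq_trans (\sum_(f : {ffun 'I_n -> 'I_m.+1}) #|cH e EH f|)).
    apply: leq_sum => f _; case: (boolP (cH e EH f == set0)) => //= h.
    by rewrite card_gt0.
  have e1 : \sum_(f : {ffun 'I_n -> 'I_m.+1}) #|cH e EH f| =
            \sum_(p : 'I_n * 'I_n) #|[set f : {ffun 'I_n -> 'I_m.+1} | p \in cH e EH f]|.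
    rewrite -(@double_count _ _ (fun f p => p \in cH e EH f)).
    by apply: eq_bigr => f _; apply: eq_card => p; rewrite inE.
  have e2 : \sum_(f : {ffun 'I_n -> 'I_m.+1}) #|cG e f| =
            \sum_(p : 'I_n * 'I_n) #|[set f : {ffun 'I_n -> 'I_m.+1} | p \in cG e f]|.
    rewrite -(@double_count _ _ (fun f p => p \in cG e f)).
    by apply: eq_bigr => f _; apply: eq_card => p; rewrite inE.
  rewrite e1; apply: (@leq_trans (\sum_(f : {ffun 'I_n -> 'I_m.+1}) #|cG e f|)).
    by rewrite e2; apply: leq_sum => p _; apply: cH_cG.
  apply: (@leq_trans (\sum_(f : {ffun 'I_n -> 'I_m.+1}) ((cG e f != set0) + #|pairs e f|))).
    by apply: leq_sum => f _; apply: bonf.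
  rewrite big_split /= leq_add2l; exact: sum_pairs.
rewrite -(leq_add2r #|[set f : {ffun 'I_n -> 'I_m.+1} | cG e f != set0]|) tG -tH.
by rewrite -addnA leq_add2l addnC.
Qed.

Definition EH0 (n m : nat) (e : rel 'I_n) : {set ('I_n * 'I_m) * ('I_n * 'I_m)} :=
  [set pq | ((pq.1.1 == pq.2.1) && (pq.1.2 != pq.2.2)) || (e pq.1.1 pq.2.1 && (pq.1.2 == pq.2.2))].
Arguments EH0 {n m}.

Lemma EH0_cover (n m : nat) (e : rel 'I_n) : symmetric e -> irreflexive e ->
  is_mcover e (@EH0 n m e).
Proof.
move=> esym eirr; apply/and5P; split.
- apply/forallP => [[u i]]; apply/forallP => [[v j]]; apply/implyP; rewrite !inE /=.
  by rewrite esym (eq_sym u) (eq_sym i) (eq_sym j).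
  by apply/forallP => [[u i]]; rewrite !inE /= !eqxx eirr.
- apply/forallP => u; apply/forallP => i; apply/forallP => j; apply/implyP => h.
  by rewrite !inE /= eqxx h.
- apply/forallP => u; apply/forallP => v; apply/forallP => i; apply/forallP => j.
  apply/implyP; rewrite !inE /= => /andP [nuv].
  by rewrite (negbTE nuv) /= => /andP [].
- apply/forallP => u; apply/forallP => v; apply/implyP => euv.
  have nuv : (u == v) = false by apply/negP => /eqP E; move: euv; rewrite E eirr.
  apply/andP; split.
    apply/forallP => i; apply/forallP => j; apply/forallP => j'; apply/implyP.
    rewrite !inE /= nuv euv /= => /andP [/eqP <- /eqP ->] //.
  apply/forallP => i; apply/forallP => i'; apply/forallP => j; apply/implyP.
  by rewrite !inE /= nuv euv /= => /andP [/eqP -> /eqP ->].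
Qed.

Lemma EH0_count (n m : nat) (e : rel 'I_n) :
  num_cover_colorings (@EH0 n m.+1 e) = chrom_poly e m.+1.
Proof.
rewrite colorings_fun; last by move=> u i j h; rewrite !inE /= eqxx h.
apply: eq_card => f; rewrite !inE; apply: eq_forallb => u; apply: eq_forallb => v.
rewrite !inE /=.
case: (eqVneq u v) => [->|nuv] /=; first by rewrite !eqxx /=; case: (e v v).
by case: (e u v); case: (f u == f v).
Qed.

Lemma dp_upper (n m : nat) (e : rel 'I_n) : symmetric e -> irreflexive e ->
  dp_chrom e m.+1 <= chrom_poly e m.+1.
Proof.
move=> esym eirr; rewrite /dp_chrom -(EH0_count n m e).
have : @EH0 n m.+1 e \in index_enum {set ('I_n * 'I_m.+1) * ('I_n * 'I_m.+1)} by rewrite mem_index_enum.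
have := @EH0_cover n m.+1 e esym eirr.
elim: (index_enum _) => [//|a r IH] hc /=; rewrite inE big_cons.
case/orP => [/eqP <-|hr]; first by rewrite hc geq_minl.
case: (is_mcover e a) => //; [apply: leq_trans (geq_minr _ _) _|]; exact: IH.
Qed.

Lemma dp_lower (n m : nat) (e : rel 'I_n) : symmetric e -> irreflexive e ->
  chrom_poly e m.+1 <= dp_chrom e m.+1 + Kc e * m.+1 ^ (n - 2).
Proof.
move=> esym eirr; rewrite /dp_chrom.
apply: (big_ind (fun x => chrom_poly e m.+1 <= x + Kc e * m.+1 ^ (n - 2))).
- apply: leq_trans (leq_addr _ _).
  apply: (@leq_trans #|{ffun 'I_n -> 'I_m.+1}|); first exact: max_card.
  rewrite card_ffun !card_ord mulnC expnM.
  case: n e esym eirr => [//|n'] e esym eirr.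
  by rewrite leq_exp2r // ltnW // ltn_expl.
- move=> x y hx hy; rewrite addn_minl leq_min hx hy //.
- move=> EH cov; exact: cover_lower.
Qed.

Lemma Kc_small (n : nat) (e : rel 'I_n) : (n < 2)%N -> Kc e = 0%N.
Proof.
move=> hn; apply/eqP; rewrite cards_eq0; apply/eqP/setP => [[[u v] q]].
rewrite !inE /=; apply/negP => /and3P [/andP [l _] _ _].
have := ltn_ord v; have := ltn_ord u; lia.
Qed.

Local Open Scope ring_scope.

Theorem mainTheorem3 (n : nat) (e : rel 'I_n) (esym : symmetric e)
    (eirr : irreflexive e) :
  exists (C : rat) (M : nat), forall m : nat, (M <= m)%N ->
    `| (chrom_poly e m)%:R - (dp_chrom e m)%:R | <= C * (m%:R : rat) ^ (n%:Z - 2).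
Proof.
exists (Kc e)%:R, 1%N => -[//|m] _.
have h1 := @dp_upper n m e esym eirr.
have h2 := @dp_lower n m e esym eirr.
have -> : (Kc e)%:R * (m.+1%:R : rat) ^ (n%:Z - 2) = (Kc e * m.+1 ^ (n - 2))%:R.
  case: (ltnP n 2) => hn.
    by rewrite Kc_small // !mul0r mul0n.
  by rewrite (subzn hn) natrM natrX.
rewrite ger0_norm ?subr_ge0 ?ler_nat //.
rewrite lerBlDl -natrD ler_nat; lia.
Qed.
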